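(* Let $G$ be a finite graph, let $t\ge 0$ be an integer, and let $H$ be a nonempty $t$-minor of $G$. Then $$\frac{\beta(H)}{\alpha(H)}\le \hat\beta_t(G),$$ where $\alpha(H)$ is the size of a largest independent set in $H$.
   Context: All graphs are finite and simple. For an integer $t\ge 0$, a graph $H$ is a $t$-shallow minor ($t$-minor) of a graph $G$ if there are pairwise disjoint sets $V_v\subseteq V(G)$, $v\in V(H)$, each inducing a connected subgraph of $G$ of radius at most $t$, such that $uv\in E(H)$ if and only if some edge of $G$ joins $V_u$ and $V_v$. For a graph $H$, $\beta(H)$ is the minimum number of cliques partitioning $V(H)$; for $x\in V(H)$, $H_x$ is the subgraph induced by the closed neighborhood $N_H[x]$; $\tilde\beta(H)=\min_{x\in V(H)}\beta(H_x)$; and $\hat\beta_t(G)=\max\{\tilde\beta(H): H \text{ a nonempty } t\text{-minor of } G\}$. *)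

(* Defs.v *)
(* A simple graph is a finType T with an edge relation e : rel T
   assumed symmetric and irreflexive (hypotheses carried in the theorem). *)
From HB Require Import structures.
From mathcomp Require Import all_boot all_order all_algebra.
From Stdlib Require Import ClassicalEpsilon.
Set Implicit Arguments. Unset Strict Implicit. Unset Printing Implicit Defensive.

Section Graphs.
Variable U : finType.
Variable f : rel U.

Definition independent (S : {set U}) : bool :=
  [forall x in S, forall y in S, ~~ f x y].
Definition clique (S : {set U}) : bool :=
  [forall x in S, forall y in S, (x != y) ==> f x y].

Definition alpha : nat := \max_(S : {set U} | independent S) #|S|.

(* minimum number of cliques partitioning the vertex set S (induced subgraph H[S]);
   the default value #|S| is attained by the partition into singletons *)
Definition beta_on (S : {set U}) : nat :=
  \big[minn/#|S|]_(P : {set {set U}} | partition P S && [forall B in P, clique B]) #|P|.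

Definition beta : nat := beta_on [set: U].

Definition cnbhd (x : U) : {set U} := [set y | (y == x) || f x y].

Definition tbeta : nat := \big[minn/#|U|]_(x : U) beta_on (cnbhd x).
End Graphs.

Definition simple_graph (T : finType) (e : rel T) : Prop :=
  symmetric e /\ irreflexive e.

(* G[S] is connected of radius at most t: some centre c in S reaches every
   vertex of S by a path of length <= t inside G[S] *)
Definition radius_le (T : finType) (e : rel T) (S : {set T}) (t : nat) : Prop :=
  exists2 c, c \in S &
    forall x, x \in S -> exists p : seq T,
      [/\ path (fun a b => e a b && (b \in S)) c p, last c p = x & size p <= t].

Definition shallow_minor (t : nat) (T : finType) (e : rel T) (U : finType) (f : rel U) : Prop :=
  exists V : U -> {set T},
    [/\ forall u v, u != v -> [disjoint V u & V v],
        forall u, radius_le e (V u) t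
      & forall u v, u != v ->
          (f u v <-> exists x y, [/\ x \in V u, y \in V v & e x y])].

Definition is_hat_beta (t : nat) (T : finType) (e : rel T) (k : nat) : Prop :=
  (exists (U : finType) (f : rel U),
      [/\ simple_graph f, shallow_minor t e f, 0 < #|U| & tbeta f = k]) /\
  (forall (U : finType) (f : rel U),
      simple_graph f -> shallow_minor t e f -> 0 < #|U| -> tbeta f <= k).

Definition hat_beta (t : nat) (T : finType) (e : rel T) : nat :=
  epsilon (inhabits 0%N) (is_hat_beta t e).

(* Main.v *)
Require Import Defs.
From HB Require Import structures.
From mathcomp Require Import all_boot all_order all_algebra.
From Stdlib Require Import ClassicalEpsilon.
Import Order.TTheory GRing.Theory Num.Theory.
Set Implicit Arguments. Unset Strict Implicit. Unset Printing Implicit Defensive.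

Lemma bigmin_le (I : finType) (P : pred I) (F : I -> nat) d i :
  P i -> \big[minn/d]_(j | P j) F j <= F i.
Proof.
move=> Pi; have : i \in index_enum I by rewrite mem_index_enum.
elim: (index_enum I) => [//|a r IH]; rewrite inE big_cons => /orP[/eqP <-|ir].
  by rewrite Pi geq_minl.
case: (P a); last exact: IH.
by apply: leq_trans (geq_minr _ _) (IH ir).
Qed.

Lemma bigmin_le_d (I : finType) (P : pred I) (F : I -> nat) d :
  \big[minn/d]_(j | P j) F j <= d.
Proof.
elim: (index_enum I) => [|a r IH]; rewrite ?big_nil ?big_cons //.
by case: (P a) => //; apply: leq_trans (geq_minr _ _) IH.
Qed.

Lemma bigmin_cases (I : finType) (P : pred I) (F : I -> nat) d :
  \big[minn/d]_(j | P j) F j = d \/ exists2 i, P i & \big[minn/d]_(j | P j) F j = F i.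
Proof.
apply: (big_ind (fun n => n = d \/ exists2 i, P i & n = F i)); first by left.
  move=> m n Hm Hn; case: (leqP m n) => H; by [].
by move=> i Pi; right; exists i.
Qed.

Section G.
Variable U : finType.
Variable f : rel U.

Lemma beta_le S P : partition P S -> [forall B in P, clique f B] ->
  beta_on f S <= #|P|.
Proof. by move=> H1 H2; apply: bigmin_le; rewrite H1 H2. Qed.

Lemma beta_opt S : exists P, [/\ partition P S, [forall B in P, clique f B] &
  #|P| <= beta_on f S].
Proof.
case: (bigmin_cases (fun P => partition P S && [forall B in P, clique f B])
   (fun P : {set {set U}} => #|P|) #|S|) => [E|[P /andP[H1 H2] E]]; last first.
  by exists P; rewrite /beta_on E.
exists [set [set x] | x in S]; split.
- rewrite /partition cover_imset; apply/and3P; split.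
  + apply/eqP/setP => y; apply/bigcupP/idP => [[x xS]|yS].
      by rewrite inE => /eqP ->.
    by exists y; rewrite ?inE.
  + have [] := @trivIimset _ _ (mem S) (@set1 U).
      move=> x y _ _ Hxy; rewrite disjoints1 inE; by rewrite eq_sym.
      apply/imsetP => [[x _ /esym/eqP]]; by rewrite -cards_eq0 cards1.
    by [].
  + apply/imsetP => [[x _ /esym/eqP]]; by rewrite -cards_eq0 cards1.
- apply/forallP => B; apply/implyP => /imsetP[x _ ->]; apply/forallP => y;
  apply/implyP; rewrite inE => /eqP ->; apply/forallP => z;
  by apply/implyP; rewrite inE => /eqP ->; rewrite eqxx.
- have -> : beta_on f S = #|S| by exact: E.
  by rewrite card_imset //; exact: set1_inj.
Qed.

Lemma beta_sub (A B : {set U}) : [disjoint A & B] ->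
  beta_on f (A :|: B) <= beta_on f A + beta_on f B.
Proof.
move=> dAB.
have [P1 [H1 C1 L1]] := beta_opt A.
have [P2 [H2 C2 L2]] := beta_opt B.
apply: leq_trans (_ : #|P1 :|: P2| <= _); last first.
  by apply: leq_trans (leq_card_setU P1 P2) (leq_add L1 L2).
apply: beta_le.
- rewrite /partition; apply/and3P; split.
  + by rewrite /cover bigcup_setU -/(cover P1) -/(cover P2)
       (cover_partition H1) (cover_partition H2).
  + apply: trivIsetU; [exact: partition_trivIset H1|exact: partition_trivIset H2|].
    by rewrite (cover_partition H1) (cover_partition H2).
  + by rewrite inE negb_or (partition0 H1) (partition0 H2).
- apply/forallP => C; apply/implyP; rewrite inE => /orP[HC|HC].
    by move/forallP/(_ C)/implyP: C1; apply.
  by move/forallP/(_ C)/implyP: C2; apply.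
Qed.

Definition alpha_on (S : {set U}) : nat :=
  \max_(I : {set U} | independent f I && (I \subset S)) #|I|.

Lemma alpha_opt (S : {set U}) : exists I, [/\ independent f I, I \subset S & alpha_on S = #|I|].
Proof.
have : #|[pred I : {set U} | independent f I && (I \subset S)]| > 0.
  apply/card_gt0P; exists set0; rewrite inE sub0set andbT.
  by apply/forallP => x; rewrite inE.
move/(eq_bigmax_cond (fun I : {set U} => #|I|)) => [I0 HI E].
move: HI; rewrite inE => /andP[H1 H2]; exists I0; split => //.
Qed.

Lemma alpha_step (S : {set U}) x : irreflexive f -> symmetric f -> x \in S ->
  (alpha_on (S :\: cnbhd f x)).+1 <= alpha_on S.
Proof.
move=> irr sym xS.
have [I [H1 H2 ->]] := alpha_opt (S :\: cnbhd f x).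
have xI : x \notin I.
  by apply/negP => /(subsetP H2); rewrite inE inE eqxx.
have -> : #|I|.+1 = #|x |: I| by rewrite cardsU1 xI.
apply: leq_bigmax_cond; apply/andP; split; last first.
  rewrite subUset sub1set xS /=; apply: subset_trans H2 _; exact: subsetDl.
apply/forallP => y; apply/implyP => /setU1P Hy; apply/forallP => z;
  apply/implyP => /setU1P Hz.
have nb : forall w, w \in I -> ~~ f x w.
  move=> w /(subsetP H2); rewrite !inE negb_or => /andP[/andP[_ Hw] _] //.
case: Hy => [->|yI]; case: Hz => [->|zI].
- by rewrite irr.
- exact: nb.
- by rewrite sym; exact: nb.
- by move/forallP/(_ y)/implyP/(_ yI)/forallP/(_ z)/implyP/(_ zI): H1.
Qed.

Lemma main_ind k : irreflexive f -> symmetric f ->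
  (forall S : {set U}, S != set0 -> exists2 x, x \in S & beta_on f (S :&: cnbhd f x) <= k) ->
  forall S : {set U}, beta_on f S <= k * alpha_on S.
Proof.
move=> irr sym Hk S; have [n Hn] := ubnP #|S|; elim: n S Hn => // n IH S Hn.
case: (eqVneq S set0) => [->|S0].
  by apply: leq_trans (bigmin_le_d _ _ _) _; rewrite cards0.
have [x xS Hx] := Hk S S0.
rewrite -{1}(setID S (cnbhd f x)).
have dis : [disjoint S :&: cnbhd f x & S :\: cnbhd f x].
  rewrite disjoints_subset; apply/subsetP => y /setIP[_ yN].
  by rewrite in_setC in_setD yN.
apply: leq_trans (beta_sub dis) _.
have Hlt : #|S :\: cnbhd f x| < n.
  suff H : #|S :\: cnbhd f x| < #|S| by apply: leq_trans H _; rewrite -ltnS.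
  apply: proper_card; apply/properP; split.
    exact: subsetDl.
  by exists x => //; rewrite !inE eqxx.
apply: leq_trans (leq_add Hx (IH _ Hlt)) _.
apply: leq_trans (_ : k * (alpha_on (S :\: cnbhd f x)).+1 <= _).
  by rewrite mulnS.
by apply: leq_mul => //; apply: alpha_step.
Qed.

End G.

Section Ind.
Variables (U : finType) (f : rel U) (S : {set U}).
Definition fS : rel {x : U | x \in S} := fun a b => f (val a) (val b).

Lemma transfer (x' : {x : U | x \in S}) :
  beta_on f (S :&: cnbhd f (val x')) <= beta_on fS (cnbhd fS x').
Proof.
have [P' [H1 C1 L1]] := beta_opt fS (cnbhd fS x').
apply: leq_trans L1.
have vi : injective (val : {x : U | x \in S} -> U) := val_inj.
rewrite -(card_imset _ (imset_inj vi)).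
apply: beta_le.
- have -> : S :&: cnbhd f (val x') = val @: cnbhd fS x'.
    apply/setP => y; apply/idP/imsetP => [|[z Hz ->]].
      rewrite !inE => /andP[yS Hy]; exists (exist _ y yS) => //.
      by rewrite inE.
    by rewrite !inE (valP z) /=; move: Hz; rewrite inE.
  by rewrite imset_partition.
- apply/forallP => C; apply/implyP => /imsetP[B HB ->].
  move/forallP/(_ B)/implyP/(_ HB)/forallP: C1 => C1.
  apply/forallP => y1; apply/implyP => /imsetP[a Ha ->].
  apply/forallP => y2; apply/implyP => /imsetP[b Hb ->].
  rewrite (inj_eq vi).
  by move/(_ a)/implyP/(_ Ha)/forallP/(_ b)/implyP/(_ Hb): C1.
Qed.
End Ind.

Lemma minor_card t (T : finType) (e : rel T) (U : finType) (f : rel U) :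
  shallow_minor t e f -> #|U| <= #|T|.+1.
Proof.
case=> V [Hd Hr _].
have g_inj : injective (fun u => [pick x in V u]).
  move=> u v E; apply/eqP; apply: contraT => uv.
  have [c cu _] := Hr u.
  move: E; case: pickP => [y yu|H]; last by have := H c; rewrite cu.
  case: pickP => [z zv [Eyz]|//].
  by move: zv; rewrite -Eyz (disjointFr (Hd u v uv) yu).
rewrite -card_option; exact: leq_card g_inj.
Qed.

Lemma hat_beta_ok t (T : finType) (e : rel T) (U0 : finType) (f0 : rel U0) :
  simple_graph f0 -> shallow_minor t e f0 -> 0 < #|U0| -> is_hat_beta t e (hat_beta t e).
Proof.
move=> s m p.
apply: epsilon_spec.
pose Pn n := exists (U : finType) (f : rel U),
  [/\ simple_graph f, shallow_minor t e f, 0 < #|U| & tbeta f = n].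
pose pb n := if excluded_middle_informative (Pn n) then true else false.
have pbE n : pb n <-> Pn n.
  by rewrite /pb; case: excluded_middle_informative.
have ex : exists n, pb n by exists (tbeta f0); apply/pbE; exists U0, f0.
have ub : forall n, pb n -> n <= #|T|.+1.
  move=> n /pbE [U [f [_ m' _ <-]]].
  exact: leq_trans (bigmin_le_d _ _ _) (minor_card m').
case: (ex_maxnP ex ub) => k Hk Hmax.
exists k; split; first by apply/pbE.
by move=> U f sf mf pf; apply: Hmax; apply/pbE; exists U, f.
Qed.

Theorem theorem2p3 (T : finType) (e : rel T) (t : nat)
    (U : finType) (f : rel U) :
  simple_graph e -> simple_graph f -> shallow_minor t e f -> (0 < #|U|)%N ->
  ((beta f)%:R / (alpha f)%:R <= (hat_beta t e)%:R :> rat)%R.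
Proof.
move=> _ sf m p; have [fsym firr] := sf.
set k := hat_beta t e.
have [_ Hk] := hat_beta_ok sf m p.
have key : forall S : {set U}, S != set0 ->
    exists2 x, x \in S & beta_on f (S :&: cnbhd f x) <= k.
  move=> S S0.
  have [x0 x0S] := set0Pn _ S0.
  pose x0' : {x : U | x \in S} := exist _ x0 x0S.
  have sfS : simple_graph (@fS U f S).
    by split; [move=> a b; rewrite /fS fsym | move=> a; rewrite /fS firr].
  have mfS : shallow_minor t e (@fS U f S).
    case: m => V [Hd Hr Hf]; exists (fun a => V (val a)); split.
    - by move=> a b ab; apply: Hd; rewrite (inj_eq val_inj).
    - by move=> a; exact: Hr.
    - by move=> a b ab; rewrite /fS; apply: Hf; rewrite (inj_eq val_inj).
  have pS : 0 < #|{: {x : U | x \in S}}| by apply/card_gt0P; exists x0'.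
  have Ht := Hk _ _ sfS mfS pS.
  have [x' Hx'] : exists x', beta_on (@fS U f S) (cnbhd (@fS U f S) x') <= tbeta (@fS U f S).
    case: (bigmin_cases xpredT (fun x => beta_on (@fS U f S) (cnbhd (@fS U f S) x))
              #|{: {x : U | x \in S}}|) => [E|[x' _ E]].
      exists x0'; rewrite /tbeta E; exact: leq_trans (bigmin_le_d _ _ _) (max_card _).
    by exists x'; rewrite /tbeta E.
  exists (val x'); first exact: valP.
  exact: leq_trans (@transfer U f S x') (leq_trans Hx' Ht).
have main := main_ind firr fsym key [set: U].
have a1 : 0 < alpha f.
  case/card_gt0P: p => x0 _; apply: leq_trans (_ : #|[set x0]| <= _); first by rewrite cards1.
  rewrite /alpha; apply: (leq_bigmax_cond (F := fun S : {set U} => #|S|)).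
  apply/forallP => y; apply/implyP; rewrite inE => /eqP ->; apply/forallP => z;
  by apply/implyP; rewrite inE => /eqP ->; rewrite firr.
have aE : alpha_on f [set: U] = alpha f.
  by rewrite /alpha_on /alpha; apply: eq_bigl => S; rewrite subsetT andbT.
rewrite ler_pdivrMr ?ltr0n // -natrM ler_nat.
by rewrite -aE; exact: main.
Qed.
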